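(* Let $C$ be an $E$-linear code of length $2n$. Then (1) $(LSHull(C))_{Res}=C_{Res}\cap (C_{Res})^{\perp_S}$ and $(LSHull(C))_{Tor}=(C_{Res})^{\perp_S}\cap C_{Tor}$; (2) $(RSHull(C))_{Res}=C_{Res}\cap (C_{Tor})^{\perp_S}$ and $(RSHull(C))_{Tor}=C_{Tor}$; (3) $(SHull(C))_{Res}=C_{Res}\cap (C_{Tor})^{\perp_S}$ and $(SHull(C))_{Tor}=(C_{Res})^{\perp_S}\cap C_{Tor}$.
   Context: $E=\langle \kappa,\tau \mid 2\kappa=2\tau=0,\ \kappa^2=\kappa,\ \tau^2=\tau,\ \kappa\tau=\kappa,\ \tau\kappa=\tau\rangle$ is the non-unital noncommutative ring with four elements $\{0,\kappa,\tau,\zeta\}$, $\zeta=\kappa+\tau$; for every $e\in E$ one has $e\kappa=e\tau=e$ and $e\zeta=0$. Every $e\in E$ is uniquely $e=u\kappa+v\zeta$ with $u,v\in\mathbb{F}_2$, and $\pi:E\to\mathbb{F}_2$, $\pi(u\kappa+v\zeta)=u$, is extended componentwise to $E^{m}\to\mathbb{F}_2^m$. $\mathbb{F}_2$ acts on $E$ by $0\cdot e=0$, $1\cdot e=e$; for $v\in\mathbb{F}_2^m$ and $e\in E$, $ev=(ev_1,\dots,ev_m)\in E^m$. An $E$-linear code of length $2n$ is a left $E$-submodule $C$ of $E^{2n}$. Its residue code is $C_{Res}=\pi(C)$ and its torsion code is $C_{Tor}=\{v\in\mathbb{F}_2^{2n}: \zeta v\in C\}$ (both binary linear codes). The symplectic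 inner product of $x=(u|v)$, $y=(u'|v')$ (with $u,v,u',v'$ of length $n$, over $E$ or over $\mathbb{F}_2$) is $\langle x,y\rangle_s=\sum_{i=1}^n u_iv'_i+\sum_{i=1}^n v_iu'_i$ (order of factors as written). For a binary linear code $B\subseteq\mathbb{F}_2^{2n}$, $B^{\perp_S}=\{z\in\mathbb{F}_2^{2n}:\langle z,w\rangle_s=0\ \forall w\in B\}$. For an $E$-linear code $C$: $C^{\perp_{S_L}}=\{z\in E^{2n}:\langle z,w\rangle_s=0\ \forall w\in C\}$, $C^{\perp_{S_R}}=\{z\in E^{2n}:\langle w,z\rangle_s=0\ \forall w\in C\}$, $C^{\perp_S}=C^{\perp_{S_L}}\cap C^{\perp_{S_R}}$, and $LSHull(C)=C\cap C^{\perp_{S_L}}$, $RSHull(C)=C\cap C^{\perp_{S_R}}$, $SHull(C)=C\cap C^{\perp_S}$ (these are again $E$-linear codes, so their residue and torsion codes are defined). *)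

(* Defs.v *)
From HB Require Import structures.
From mathcomp Require Import all_boot all_algebra.
Set Implicit Arguments. Unset Strict Implicit. Unset Printing Implicit Defensive.
Import GRing.Theory.
Local Open Scope ring_scope.

(* The ring E is modelled by its coordinates: e = u*kappa + v*zeta is (u, v). *)
Definition F2 := 'F_2.
Definition E : finType := (F2 * F2)%type.

Definition Ezero : E := (0, 0).
Definition Eadd (e f : E) : E := (e.1 + f.1, e.2 + f.2).
(* (u kappa + v zeta)(u' kappa + v' zeta) = u u' kappa + v u' zeta,
   using kappa^2 = kappa, kappa zeta = 0, zeta kappa = zeta, zeta^2 = 0. *)
Definition Emul (e f : E) : E := (e.1 * f.1, e.2 * f.1).

Definition kappa : E := (1, 0).
Definition zeta  : E := (0, 1).
Definition tau   : E := Eadd kappa zeta.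

Lemma E_relations :
  (Eadd kappa kappa = Ezero /\ Eadd tau tau = Ezero) /\
  [/\ Emul kappa kappa = kappa, Emul tau tau = tau,
      Emul kappa tau = kappa & Emul tau kappa = tau].
Proof. by do !split; apply/eqP. Qed.

Definition piE (e : E) : F2 := e.1.

Definition F2act (a : F2) (e : E) : E := if a == 0 then Ezero else e.

Definition Evec (n : nat) := {ffun 'I_(n + n) -> E}.
Definition Bvec (n : nat) := {ffun 'I_(n + n) -> F2}.

Definition Evadd n (x y : Evec n) : Evec n := [ffun i => Eadd (x i) (y i)].
Definition Evzero n : Evec n := [ffun=> Ezero].
Definition Evscale n (e : E) (x : Evec n) : Evec n := [ffun i => Emul e (x i)].
Definition piv n (x : Evec n) : Bvec n := [ffun i => piE (x i)].
Definition actv n (e : E) (v : Bvec n) : Evec n := [ffun i => F2act (v i) e].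

Definition is_Ecode n (C : {set Evec n}) : Prop :=
  [/\ Evzero n \in C,
      (forall x y, x \in C -> y \in C -> Evadd x y \in C) &
      (forall e x, x \in C -> Evscale e x \in C)].

Definition Esum (k : nat) (f : 'I_k -> E) : E :=
  foldr Eadd Ezero [seq f i | i <- enum 'I_k].

(* symplectic inner products, x = (u|v), y = (u'|v') *)
Definition sympE n (x y : Evec n) : E :=
  Esum (fun i : 'I_n => Eadd (Emul (x (lshift n i)) (y (rshift n i)))
                             (Emul (x (rshift n i)) (y (lshift n i)))).
Definition sympB n (x y : Bvec n) : F2 :=
  \sum_(i < n) (x (lshift n i) * y (rshift n i) + x (rshift n i) * y (lshift n i)).

Definition Res n (C : {set Evec n}) : {set Bvec n} := [set piv x | x in C].
Definition Tor n (C : {set Evec n}) : {set Bvec n} :=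
  [set v | actv zeta v \in C].

Definition Bperp n (B : {set Bvec n}) : {set Bvec n} :=
  [set z | [forall w in B, sympB z w == 0]].

Definition LperpE n (C : {set Evec n}) : {set Evec n} :=
  [set z | [forall w in C, sympE z w == Ezero]].
Definition RperpE n (C : {set Evec n}) : {set Evec n} :=
  [set z | [forall w in C, sympE w z == Ezero]].
Definition perpE n (C : {set Evec n}) : {set Evec n} := LperpE C :&: RperpE C.

Definition LSHull n (C : {set Evec n}) := C :&: LperpE C.
Definition RSHull n (C : {set Evec n}) := C :&: RperpE C.
Definition SHull n (C : {set Evec n}) := C :&: perpE C.

(* Main.v *)
Require Import Defs.
From HB Require Import structures.
From mathcomp Require Import all_boot all_algebra.
Set Implicit Arguments. Unset Strict Implicit. Unset Printing Implicit Defensive.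
Import GRing.Theory.
Local Open Scope ring_scope.

Lemma F2_cases (a : F2) : a = 0 \/ a = 1.
Proof. case: a => [[|[|k]] Hk] //=; [left|right]; exact/val_inj. Qed.

Lemma F2_addrr (a : F2) : a + a = 0.
Proof. case: (F2_cases a) => ->; exact/eqP. Qed.

Section S.
Variable n : nat.
Implicit Types (a b : Bvec n) (x y : Evec n) (C : {set Evec n}).

Definition mk a b : Evec n := [ffun i => (a i, b i)].
Definition sec x : Bvec n := [ffun i => (x i).2].
Definition bz : Bvec n := [ffun=> 0].

Lemma mkE x : x = mk (piv x) (sec x).
Proof. by apply/ffunP => i; rewrite !ffunE; case: (x i). Qed.
Lemma piv_mk a b : piv (mk a b) = a.
Proof. by apply/ffunP => i; rewrite !ffunE. Qed.
Lemma sec_mk a b : sec (mk a b) = b.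
Proof. by apply/ffunP => i; rewrite !ffunE. Qed.

Lemma actv_zeta a : actv zeta a = mk bz a.
Proof.
apply/ffunP => i; rewrite !ffunE /F2act.
by case: (F2_cases (a i)) => ->.
Qed.

Lemma Esum_pair k (f : 'I_k -> E) :
  Esum f = (\sum_i (f i).1, \sum_i (f i).2).
Proof.
rewrite /Esum.
have H : forall s, foldr Eadd Ezero [seq f i | i <- s] =
   (\sum_(i <- s) (f i).1, \sum_(i <- s) (f i).2).
  by elim => [|i s IH] /=; rewrite ?big_nil ?big_cons // IH.
by rewrite H !big_enum.
Qed.

Lemma sympE_pair x y :
  sympE x y = (sympB (piv x) (piv y), sympB (sec x) (piv y)).
Proof.
rewrite /sympE Esum_pair /sympB; congr pair; apply: eq_bigr => i _;
by rewrite !ffunE.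
Qed.

Lemma sympBC a b : sympB a b = sympB b a.
Proof. by apply: eq_bigr => i _; rewrite addrC mulrC [_ * b _]mulrC. Qed.

Lemma sympB0 b : sympB bz b = 0.
Proof. by apply: big1 => i _; rewrite !ffunE !mul0r addr0. Qed.

Lemma inBperp (B : {set Bvec n}) a :
  (a \in Bperp B) = [forall w in B, sympB a w == 0].
Proof. by rewrite inE. Qed.

Variable C : {set Evec n}.
Hypothesis HC : is_Ecode C.

Lemma TorE b : (b \in Tor C) = (mk bz b \in C).
Proof. by rewrite inE actv_zeta. Qed.

Lemma mk_a0 a : (mk a bz \in C) = (a \in Res C).
Proof.
case: HC => _ _ Hs.
apply/idP/idP.
  by move=> H; apply/imsetP; exists (mk a bz) => //; rewrite piv_mk.
case/imsetP => x xC ->.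
have := Hs kappa x xC.
congr (_ \in C); apply/ffunP => i; rewrite !ffunE /Emul /=.
by rewrite mul1r mul0r.
Qed.

Lemma Res_Tor a : a \in Res C -> a \in Tor C.
Proof.
case: HC => _ _ Hs.
case/imsetP => x xC ->; rewrite TorE.
have := Hs zeta x xC.
congr (_ \in C); apply/ffunP => i; rewrite !ffunE /Emul /=.
by rewrite mul1r mul0r.
Qed.

Lemma memC a b : (mk a b \in C) = (a \in Res C) && (b \in Tor C).
Proof.
case: HC => _ Ha _.
rewrite -mk_a0 TorE.
apply/idP/andP.
  move=> H; have Ha0 : mk a bz \in C.
    by rewrite mk_a0; apply/imsetP; exists (mk a b) => //; rewrite piv_mk.
  split => //.
  have := Ha _ _ H Ha0.
  congr (_ \in C); apply/ffunP => i; rewrite !ffunE /Eadd /=.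
  by rewrite F2_addrr addr0.
case=> H1 H2; have := Ha _ _ H1 H2.
congr (_ \in C); apply/ffunP => i; rewrite !ffunE /Eadd /=.
by rewrite addr0 add0r.
Qed.

Lemma memC' x : (x \in C) = (piv x \in Res C) && (sec x \in Tor C).
Proof. by rewrite {1}(mkE x) memC. Qed.

Lemma LperpP a b : (mk a b \in LperpE C) = (a \in Bperp (Res C)) && (b \in Bperp (Res C)).
Proof.
rewrite !inE.
apply/forallP/andP.
  move=> H; split; apply/forall_inP => w /imsetP [x xC ->];
  have := H x; rewrite xC /= sympE_pair piv_mk sec_mk; case/eqP => ? ?; exact/eqP.
case=> /forall_inP H1 /forall_inP H2 x; apply/implyP => xC.
have xR : piv x \in Res C by apply/imsetP; exists x.
by rewrite sympE_pair piv_mk sec_mk (eqP (H1 _ xR)) (eqP (H2 _ xR)).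
Qed.

Lemma RperpP a b : (mk a b \in RperpE C) = (a \in Bperp (Tor C)).
Proof.
rewrite !inE.
apply/forallP/forall_inP.
  move=> H w wT; have := H (mk bz w); rewrite memC wT andbT.
  case: HC => H0 _ _.
  have -> : bz \in Res C.
    apply/imsetP; exists (Evzero n) => //; apply/ffunP => i; rewrite !ffunE //.
  move/implyP => /(_ isT); rewrite sympE_pair !piv_mk sec_mk; case/eqP => _.
  by rewrite sympBC => ->.
move=> H x; apply/implyP; rewrite memC' => /andP [xR xT].
by rewrite sympE_pair piv_mk [sympB (piv x) _]sympBC [sympB (sec x) _]sympBC
  (eqP (H _ xT)) (eqP (H _ (Res_Tor xR))).
Qed.

Lemma bz_perp (B : {set Bvec n}) : bz \in Bperp B.
Proof. by rewrite inBperp; apply/forall_inP => w _; rewrite sympB0. Qed.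

Lemma bz_Tor : bz \in Tor C.
Proof.
case: HC => H0 _ _; rewrite TorE.
by have -> : mk bz bz = Evzero n by apply/ffunP => i; rewrite !ffunE.
Qed.

Lemma bz_Res : bz \in Res C.
Proof. by rewrite -mk_a0 -TorE bz_Tor. Qed.

Lemma perp_TR a : a \in Bperp (Tor C) -> a \in Bperp (Res C).
Proof.
rewrite !inBperp => /forall_inP H; apply/forall_inP => w wR.
exact: H _ (Res_Tor wR).
Qed.

End S.
Arguments bz {n}.

Lemma ResS n (S : {set Evec n}) a : (a \in Res S) = [exists b, mk a b \in S].
Proof.
apply/imsetP/existsP.
  by case=> x xS ->; exists (sec x); rewrite -mkE.
by case=> b H; exists (mk a b) => //; rewrite piv_mk.
Qed.

Lemma TorS n (S : {set Evec n}) b : (b \in Tor S) = (mk bz b \in S).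
Proof. by rewrite inE actv_zeta. Qed.

Theorem mainTheorem1 (n : nat) (C : {set Evec n}) :
  is_Ecode C ->
  (Res (LSHull C) = Res C :&: Bperp (Res C) /\
   Tor (LSHull C) = Bperp (Res C) :&: Tor C) /\
  (Res (RSHull C) = Res C :&: Bperp (Tor C) /\
   Tor (RSHull C) = Tor C) /\
  (Res (SHull C) = Res C :&: Bperp (Tor C) /\
   Tor (SHull C) = Bperp (Res C) :&: Tor C).
Proof.
move=> HC.
have T0 := bz_Tor HC; have R0 := bz_Res HC.
split; [split|split; split]; apply/setP => a.
- rewrite ResS in_setI; apply/existsP/idP.
    by case=> b; rewrite /LSHull /RSHull /SHull /perpE !in_setI memC // LperpP // => /andP [/andP [-> _] /andP [-> _]].
  by case/andP=> H1 H2; exists bz; rewrite /LSHull /RSHull /SHull /perpE !in_setI memC // LperpP // H1 H2 T0 bz_perp.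
- by rewrite TorS /LSHull /RSHull /SHull /perpE !in_setI memC // LperpP // R0 bz_perp /= andbC.
- rewrite ResS in_setI; apply/existsP/idP.
    by case=> b; rewrite /LSHull /RSHull /SHull /perpE !in_setI memC // RperpP // => /andP [/andP [-> _] ->].
  by case/andP=> H1 H2; exists bz; rewrite /LSHull /RSHull /SHull /perpE !in_setI memC // RperpP // H1 H2 T0.
- by rewrite TorS /LSHull /RSHull /SHull /perpE !in_setI memC // RperpP // R0 bz_perp /= andbT.
- rewrite ResS in_setI; apply/existsP/idP.
    by case=> b; rewrite /LSHull /RSHull /SHull /perpE !in_setI memC // LperpP // RperpP // => /andP [/andP [-> _] /andP [_ ->]].
  case/andP=> H1 H2; exists bz; rewrite /LSHull /RSHull /SHull /perpE !in_setI memC // LperpP // RperpP //.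
  by rewrite H1 H2 T0 bz_perp perp_TR.
- by rewrite TorS /LSHull /RSHull /SHull /perpE !in_setI memC // LperpP // RperpP // R0 !bz_perp /= andbT andbC.
Qed.
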